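(* Let $2/5 < r < 1$, put $p = \left\lceil \frac{5r-2}{1-r} \right\rceil$ and $\alpha = p - \frac{5r-2}{1-r}$ (so $p \ge 1$ and $0 \le \alpha < 1$), and let $\alpha = (0.\alpha_1 \alpha_2 \cdots)_2$ be the binary expansion of $\alpha$ with infinitely many zero digits. Define binary words $w^{\langle 0 \rangle} = \emptyset$ (the empty word) and $w^{\langle i \rangle} = w^{\langle i-1 \rangle} w^{\langle i-1 \rangle}\, 01011\, 0^{p - \alpha_i}$ for $i \geq 1$. Let $\ell_i$ be the length of $w^{\langle i \rangle}$, $\zeta_i = |Z(w^{\langle i \rangle})|$ and $\pi_i = |P(w^{\langle i \rangle})|$. Then for every $i \geq 1$, $$\ell_i = (2^i - 1)(p+5) - \sum_{j=1}^{i} 2^{i-j}\alpha_j,\qquad \zeta_i = (2^i - 1)(p+2) - \sum_{j=1}^{i} 2^{i-j}\alpha_j,$$ $$\pi_i = (2^i - 1)p - 1 - \sum_{j=1}^{i} 2^{i-j}\alpha_j + \delta_{p,1}\alpha_i,$$ where $\delta_{p,1}$ is the Kronecker delta.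
   Context: For a binary word $x$, $x^j$ denotes $j$ concatenated copies of $x$ ($x^0$ is empty), and juxtaposition denotes concatenation. For a binary word $w = w_1 \cdots w_\ell$ of length $\ell$, $Z(w)$ is the set of indices $i$ with $w_i = 0$, and $P(w)$ is the set of indices $i \geq 2$ such that at least one of the following holds: (i) $\ell \geq i$ and $w_{i-1} w_i = 00$; (ii) $\ell \geq i+2$ and $w_{i-1} w_i w_{i+1} w_{i+2} = 0100$; (iii) $\ell \geq i+3$ and $w_{i-1} \cdots w_{i+3} = 01010$. *)

(* Defs.v *)
From Stdlib Require Import Reals ZArith.
From mathcomp Require Import all_boot.
Set Implicit Arguments. Unset Strict Implicit. Unset Printing Implicit Defensive.

(* binary words: false = letter 0, true = letter 1 *)
Definition word := seq bool.

(* 1-indexed letter w_k (only used for 1 <= k <= size w) *)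
Definition letter (w : word) (k : nat) : bool := nth true w k.-1.
Definition is0 (w : word) (k : nat) : bool := ~~ letter w k.

Definition cardZ (w : word) : nat := count negb w.

(* membership in P(w), for an index i >= 2 *)
Definition inP (w : word) (i : nat) : bool :=
  [|| (i <= size w) && is0 w i.-1 && is0 w i
    , (i.+2 <= size w) && is0 w i.-1 && letter w i && is0 w i.+1 && is0 w i.+2
    | (i.+3 <= size w) && is0 w i.-1 && letter w i && is0 w i.+1
                       && letter w i.+2 && is0 w i.+3 ].

Definition cardP (w : word) : nat := count (inP w) (iota 2 (size w - 1)).

Fixpoint wseq (p : nat) (a : nat -> nat) (i : nat) : word :=
  match i with
  | 0 => [::]
  | i'.+1 => wseq p a i' ++ wseq p a i' ++ [:: false; true; false; true; true]
               ++ nseq (p - a i'.+1) false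
  end.

Definition digsum (a : nat -> nat) (i : nat) : nat :=
  \sum_(1 <= j < i.+1) 2 ^ (i - j) * a j.

Section RealPart.
Local Open Scope R_scope.
Definition ratio (r : R) : R := (5 * r - 2) / (1 - r).
Definition bin_term (a : nat -> nat) (k : nat) : R := INR (a (S k)) / 2 ^ (S k).
End RealPart.

(* Main.v *)
Require Import Defs.
From Stdlib Require Import Reals ZArith Lra Lia.
From mathcomp Require Import all_boot.
From mathcomp Require Import zify.

Definition pat (s : word) : bool :=
  match s with
  | false :: false :: _ => true
  | false :: true :: false :: false :: _ => true
  | false :: true :: false :: true :: false :: _ => true
  | _ => false
  end.

Fixpoint cntP (s : word) : nat :=
  match s with [::] => 0 | c :: s' => pat (c :: s') + cntP s' end.

Lemma inP2 w : inP w 2 = pat w.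
Proof. by case: w => [|[] [|[] [|[] [|[] [|[] s]]]]]. Qed.

Lemma inP_cons c w j : inP (c :: w) j.+3 = inP w j.+2.
Proof. by []. Qed.

Lemma cardP_cons c w : cardP (c :: w) = pat (c :: w) + cardP w.
Proof.
rewrite /cardP [size _]/= subSS subn0. case: w => [|d w].
  by case: c.
rewrite [size _]/= subSS subn0 [iota 2 _]/= [count _ (2 :: _)]/= inP2.
congr (_ + _). have -> : iota 3 (size w) = map (addn 1) (iota 2 (size w)) by rewrite -iotaDl.
rewrite count_map.
apply: eq_in_count => k; rewrite mem_iota => /andP[h _] /=. case: k h => [|[|k]] //.
Qed.

Lemma cardP_cnt w : cardP w = cntP w.
Proof. elim: w => [|c w IH]; first by []. by rewrite cardP_cons IH. Qed.

Lemma pat_app s y : 5 <= size s -> pat (s ++ y) = pat s.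
Proof. by case: s => [|[] [|[] [|[] [|[] [|[] s]]]]]. Qed.

Lemma cntP_cons c s : cntP (c :: s) = pat (c :: s) + cntP s.
Proof. by []. Qed.

Lemma cntA x m y : 4 <= size m ->
  cntP (x ++ m ++ y) + cntP m = cntP (x ++ m) + cntP (m ++ y).
Proof.
move=> hm; elim: x => [|c x IH]; first by rewrite /= addnC.
rewrite !cat_cons !cntP_cons.
have -> : pat (c :: x ++ m ++ y) = pat (c :: x ++ m).
  by rewrite (_ : c :: x ++ m ++ y = (c :: x ++ m) ++ y) ?catA // pat_app //= size_cat; lia.
rewrite -addnA IH; lia.
Qed.

Lemma cnt_nseq k : cntP (nseq k false) = k.-1.
Proof. elim: k => [|k IH] //; rewrite [nseq _ _]/= cntP_cons IH; case: k {IH} => //. Qed.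

Lemma cnt_zpre k z : cntP (nseq k false ++ false :: z) = k + cntP (false :: z).
Proof. elim: k => [|k IH] //=. rewrite IH. case: k {IH} => //=. Qed.

Definition T : word := [:: false; true; false; true; true].

Lemma cnt_T y : cntP (T ++ y) = cntP y.
Proof. by []. Qed.

Lemma cnt_main u' k v' :
  cntP ((u' ++ T ++ nseq k false) ++ (T ++ v')) =
  cntP (u' ++ T ++ nseq k false) + cntP (T ++ v') + (0 < k).
Proof.
have := cntA u' (T ++ nseq k false) (T ++ v') isT.
rewrite -catA -!catA !cnt_T cnt_nseq.
have -> : cntP (nseq k false ++ T ++ v') = k + cntP v'.
  by rewrite (_ : T ++ v' = false :: (behead T ++ v')) // cnt_zpre -/(T ++ v') cnt_T.
lia.
Qed.

Section W.
Variables (p : nat) (a : nat -> nat).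
Local Notation w := (wseq p a).

Lemma w_S n : w n.+1 = w n ++ w n ++ T ++ nseq (p - a n.+1) false.
Proof. by []. Qed.

Lemma w_start n : exists v', w n.+1 = T ++ v'.
Proof.
elim: n => [|n [v' IH]]; first by eexists.
by rewrite w_S IH -catA; eexists.
Qed.

Lemma cnt_w1 : cntP (w 1) = (p - a 1).-1.
Proof. by rewrite w_S cnt_T cnt_nseq. Qed.

Lemma cnt_wS n : cntP (w n.+2) =
  2 * cntP (w n.+1) + (p - a n.+2).-1 + 2 * (0 < p - a n.+1).
Proof.
have [v' Hs] := w_start n.
have He : w n.+1 = (w n ++ w n) ++ T ++ nseq (p - a n.+1) false by rewrite w_S catA.
rewrite w_S.
have E1 : cntP (w n.+1 ++ T ++ nseq (p - a n.+2) false) =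
   cntP (w n.+1) + (p - a n.+2).-1 + (0 < p - a n.+1).
  by rewrite {1}He cnt_main -He cnt_T cnt_nseq.
have E2 : cntP (w n.+1 ++ w n.+1 ++ T ++ nseq (p - a n.+2) false) =
   cntP (w n.+1) + cntP (w n.+1 ++ T ++ nseq (p - a n.+2) false) + (0 < p - a n.+1).
  set t := T ++ nseq (p - a n.+2) false.
  have -> : w n.+1 ++ w n.+1 ++ t = ((w n ++ w n) ++ T ++ nseq (p - a n.+1) false) ++ T ++ (v' ++ t).
    by rewrite -He Hs -!catA.
  by rewrite cnt_main -He catA -Hs.
rewrite E2 E1. lia.
Qed.

Lemma size_wS n : size (w n.+1) = 2 * size (w n) + 5 + (p - a n.+1).
Proof. rewrite w_S !size_cat size_nseq /=. lia. Qed.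

Lemma cardZ_wS n : cardZ (w n.+1) = 2 * cardZ (w n) + 2 + (p - a n.+1).
Proof. rewrite /cardZ w_S !count_cat count_nseq /=. lia. Qed.

End W.

Lemma digsumS a n : digsum a n.+2 = 2 * digsum a n.+1 + a n.+2.
Proof.
rewrite /digsum big_nat_recr //= subnn expn0 mul1n; congr (_ + _).
rewrite big_distrr /=; apply: eq_big_nat => j /andP[_ hj].
rewrite mulnA -expnS; congr (2 ^ _ * _). lia.
Qed.

Lemma digsum1 a : digsum a 1 = a 1.
Proof. by rewrite /digsum big_nat1 subnn mul1n. Qed.

Theorem lemma4p12 (r : R) (p : nat) (alpha : R) (a : nat -> nat) :
  Rlt (IZR 2 / IZR 5) r -> Rlt r (IZR 1) ->
  (* p = ceiling((5r-2)/(1-r)) *)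
  Rlt (Rminus (INR p) (IZR 1)) (ratio r) -> Rle (ratio r) (INR p) ->
  (* alpha = p - (5r-2)/(1-r) *)
  alpha = Rminus (INR p) (ratio r) ->
  (* (a_i)_{i>=1} is the binary expansion of alpha with infinitely many zero digits *)
  (forall i, (1 <= i)%N -> (a i <= 1)%N) ->
  infinite_sum (bin_term a) alpha ->
  (forall n, exists i, (n < i)%N /\ a i = 0%N) ->
  forall i, (1 <= i)%N ->
    Z.of_nat (size (wseq p a i))
      = ((2 ^ Z.of_nat i - 1) * (Z.of_nat p + 5) - Z.of_nat (digsum a i))%Z
 /\ Z.of_nat (cardZ (wseq p a i))
      = ((2 ^ Z.of_nat i - 1) * (Z.of_nat p + 2) - Z.of_nat (digsum a i))%Z
 /\ Z.of_nat (cardP (wseq p a i))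
      = ((2 ^ Z.of_nat i - 1) * Z.of_nat p - 1 - Z.of_nat (digsum a i)
         + (if p == 1%N then Z.of_nat (a i) else 0))%Z.
Proof.
move=> h1 h2 h3 h4 _ ha _ _.
have hp : (1 <= p)%N.
  have hr : Rlt 0 (ratio r) by rewrite /ratio; apply: Rdiv_lt_0_compat; lra.
  case: p h4 {h3} => [|p'] h4 //. simpl in h4. lra.
case=> // n _; rewrite cardP_cnt.

elim: n => [|n [IH1 [IH2 IH3]]].
  rewrite cnt_w1 digsum1 w_S /cardZ !size_cat !count_cat size_nseq count_nseq.
  rewrite (_ : size T = 5) // (_ : count negb T = 2) // (_ : wseq p a 0 = [::]) //.
  rewrite (_ : Z.of_nat 1 = 1%Z) // Z.pow_1_r.
  rewrite [size [::]]/= [count _ [::]]/= [~~ false]/= mul1n !add0n.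
  have := ha 1 isT. case: eqP => [->|hp1] h; split; try lia; split; try lia.
have hn2 := ha n.+2 isT. have hn1 := ha n.+1 isT.
rewrite cnt_wS cardZ_wS size_wS digsumS.
rewrite (Nat2Z.inj_succ n.+1) Z.pow_succ_r; last lia.
move: IH1 IH2 IH3; set X := (2 ^ Z.of_nat n.+1)%Z.
case: eqP => [->|hp1]; lia.
Qed.
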